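(* Let $\mathbb{A}$ be a countable homogeneous structure, $\mathbb{F}$ a field, $d\ge1$, and $\mathscr{B}$ a family of finite substructures of $\mathbb{A}$ such that every finite substructure of $\mathbb{A}$ is a substructure of some $\mathbb{B}\in\mathscr{B}$. Then the length of $\operatorname{Lin}_{\mathbb{F}}\mathbb{A}^d$ (with respect to $\operatorname{Aut}(\mathbb{A})$) is at most $\sup_{\mathbb{B}\in\mathscr{B}}$ of the length of $\operatorname{Lin}_{\mathbb{F}}\mathbb{B}^d$ (with respect to $\operatorname{Aut}(\mathbb{B})$).
   Context: Homogeneous: every isomorphism between finite substructures extends to an automorphism. For a group $G$ acting on a set $X$, $\operatorname{Lin}_{\mathbb{F}}X$ is the space of finite formal linear combinations of elements of $X$ with the induced linear $G$-action; the length of $\operatorname{Lin}_{\mathbb{F}}X$ with respect to $G$ is the supremum of $n$ such that there is a chain $V_0\subsetneq\dots\subsetneq V_n$ of $G$-invariant subspaces. Here $G=\operatorname{Aut}(\mathbb{A})$ acts on $\mathbb{A}^d$ and $\operatorname{Aut}(\mathbb{B})$ on $\mathbb{B}^d$ componentwise. *)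

(* Defs.v *)
From HB Require Import structures.
From mathcomp Require Import all_boot all_algebra.
From mathcomp Require Import boolp classical_sets.
From Stdlib Require List.
Set Implicit Arguments.
Unset Strict Implicit.
Unset Printing Implicit Defensive.
Import GRing.Theory.
Local Open Scope ring_scope.

Record signature := Signature { sym : Type; arity : sym -> nat }.

Definition interp (L : signature) (T : Type) :=
  forall s : sym L, ('I_(arity s) -> T) -> Prop.

Definition induced (L : signature) (T : Type) (I : interp L T) (P : set T)
  : interp L {x : T | P x} :=
  fun s t => I s (fun i => proj1_sig (t i)).
Arguments induced {L T} I P _ _.

Definition is_iso (L : signature) (T1 T2 : Type) (I1 : interp L T1)
  (I2 : interp L T2) (f : T1 -> T2) (g : T2 -> T1) : Prop :=
  cancel f g /\ cancel g f /\
  forall s (t : 'I_(arity s) -> T1), I2 s (fun i => f (t i)) <-> I1 s t.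

Definition is_aut (L : signature) (T : Type) (I : interp L T) (g h : T -> T) :=
  is_iso I I g h.

Definition finite_subset (T : Type) (P : set T) : Prop :=
  exists s : seq T, forall x, P x -> List.In x s.

Definition countable_type (T : Type) : Prop :=
  exists f : T -> nat, injective f.

Definition homogeneous (L : signature) (T : Type) (I : interp L T) : Prop :=
  forall (S1 S2 : set T), finite_subset S1 -> finite_subset S2 ->
  forall (f : {x | S1 x} -> {x | S2 x}) (g : {x | S2 x} -> {x | S1 x}),
    is_iso (induced I S1) (induced I S2) f g ->
    exists a b : T -> T, is_aut I a b /\
      forall x : {x | S1 x}, a (proj1_sig x) = proj1_sig (f x).

(** Lin_F X : finite formal linear combinations = finitely supported
    coefficient functions X -> F. *)
Definition finsupp (X : Type) (F : fieldType) (v : X -> F) : Prop :=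
  exists s : seq X, forall x, v x != 0 -> List.In x s.

Definition lin_subspace (X : Type) (F : fieldType) (W : set (X -> F)) : Prop :=
  [/\ forall v, W v -> finsupp v,
      W (fun _ => 0) &
      forall (a : F) u v, W u -> W v -> W (fun x => a * u x + v x)].

(** Invariance under the linear action of Aut(T,I) on Lin_F (T^d), the
    automorphism g (inverse h) acting componentwise on T^d = 'I_d -> T:
    (g . v)(t) = v (g^-1 o t). *)
Definition aut_invariant (L : signature) (T : Type) (I : interp L T)
  (F : fieldType) (d : nat) (W : set (('I_d -> T) -> F)) : Prop :=
  forall g h, is_aut I g h ->
    forall v, W v -> W (fun t => v (fun i => h (t i))).

Definition proper_sub (X : Type) (V W : set X) : Prop :=
  (forall x, V x -> W x) /\ exists x, W x /\ ~ V x.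

Definition has_chain (L : signature) (T : Type) (I : interp L T)
  (F : fieldType) (d n : nat) : Prop :=
  exists V : nat -> set (('I_d -> T) -> F),
    (forall i, (i <= n)%N -> lin_subspace (V i) /\ aut_invariant I (V i)) /\
    (forall i, (i < n)%N -> proper_sub (V i) (V i.+1)).

(** Extended naturals: None = infinity. *)
Definition enat := option nat.

Definition enat_le (a b : enat) : Prop :=
  match a, b with
  | _, None => True
  | None, Some _ => False
  | Some m, Some n => (m <= n)%N
  end.

Definition is_esup (S : set enat) (e : enat) : Prop :=
  (forall x, S x -> enat_le x e) /\
  (forall u, (forall x, S x -> enat_le x u) -> enat_le e u).

(** Supremum in the extended naturals (exists and is unique). *)
Definition esup (S : set enat) : enat := xget None [set e | is_esup S e].

Definition lin_pow_length (L : signature) (T : Type) (I : interp L T)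
  (F : fieldType) (d : nat) : enat :=
  esup (fun e => exists n, has_chain I F d n /\ e = Some n).

(* Main.v *)
Require Import Defs.
From HB Require Import structures.
From mathcomp Require Import all_boot all_algebra.
From mathcomp Require Import boolp classical_sets.
Set Implicit Arguments. Unset Strict Implicit.
Import GRing.Theory.
Local Open Scope ring_scope.

Lemma enat_le_trans a b c : enat_le a b -> enat_le b c -> enat_le a c.
Proof.
case: a => [a|]; case: b => [b|]; case: c => [c|] //=.
exact: leq_trans.
Qed.

Lemma esup_bounded (S : set enat) m :
  (forall x, S x -> enat_le x (Some m)) -> exists e, is_esup S e.
Proof.
elim: m => [|m IH] Hm.
  exists (Some 0%N); split => // u _; by case: u.
case: (pselect (S (Some m.+1))) => HS.
  exists (Some m.+1); split => // u Hu; exact: Hu.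
apply: IH => x Sx; have := Hm x Sx; case: x Sx => [k|] //= Sx.
rewrite leq_eqVlt => /orP [/eqP Ek|] //; by rewrite Ek in Sx.
Qed.

Lemma esupP (S : set enat) : is_esup S (esup S).
Proof.
rewrite /esup; apply: (@xgetPex _ None [set e | is_esup S e]).
case: (pselect (exists m, forall x, S x -> enat_le x (Some m))) => [[m Hm]|Hn].
  exact: esup_bounded Hm.
exists None; split => [x _|u Hu]; first by case: x.
case: u Hu => [m|] // Hu; exfalso; apply: Hn; by exists m.
Qed.
Definition extv (A : Type) (B : set A) (F : fieldType) d
  (v : ('I_d -> {x | B x}) -> F) : ('I_d -> A) -> F :=
  fun t => match pselect (forall i, B (t i)) with
  | left H => v (fun i => exist _ (t i) (H i))
  | right _ => 0 end.

Lemma exist_proj (A : Type) (B : set A) (y : {x | B x}) (H : B (proj1_sig y)) :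
  exist _ (proj1_sig y) H = y.
Proof. move: H; case: y => x p q /=; congr exist; exact: Prop_irrelevance. Qed.

Lemma extv_emb (A : Type) (B : set A) (F : fieldType) d v (t : 'I_d -> {x | B x}) :
  @extv A B F d v (fun i => proj1_sig (t i)) = v t.
Proof.
rewrite /extv; case: pselect => [H|H].
  by congr v; apply: funext => i; rewrite exist_proj.
by exfalso; apply: H => i; exact: proj2_sig (t i).
Qed.

Lemma extv_out (A : Type) (B : set A) (F : fieldType) d v (t : 'I_d -> A) :
  ~ (forall i, B (t i)) -> @extv A B F d v t = 0.
Proof. by rewrite /extv; case: pselect. Qed.

Lemma extv0 (A : Type) (B : set A) (F : fieldType) d :
  @extv A B F d (fun _ => 0) = (fun _ => 0).
Proof. by apply: funext => t; rewrite /extv; case: pselect. Qed.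

Lemma extvD (A : Type) (B : set A) (F : fieldType) d a u v :
  @extv A B F d (fun x => a * u x + v x) =
  (fun t => a * extv u t + extv v t).
Proof. apply: funext => t; rewrite /extv; case: pselect => // _; by rewrite mulr0 addr0. Qed.

Lemma In_enum (T : finType) (x : T) : List.In x (enum T).
Proof.
have : x \in enum T by rewrite mem_enum.
elim: (enum T) => //= y s IH; rewrite in_cons => /orP [/eqP ->|/IH]; by [left|right].
Qed.

Lemma chain_fin (X : Type) (F : fieldType) (V : nat -> set (X -> F)) n :
  (forall i, (i <= n)%N -> lin_subspace (V i)) ->
  (forall i, (i < n)%N -> Defs.proper_sub (V i) (V i.+1)) ->
  forall k, (k <= n)%N -> exists s : seq X, forall i, (i < k)%N ->
    exists w, V i.+1 w /\ ~ V i w /\ forall t, w t != 0 -> List.In t s.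
Proof.
move=> Hl Hp; elim => [|k IH] Hk; first by exists [::].
have [s Hs] := IH (ltnW Hk).
have [_ [w [Vw nVw]]] := Hp k Hk.
have [Hf _ _] := Hl k.+1 Hk.
have [s' Hs'] := Hf w Vw.
exists (s ++ s') => i; rewrite ltnS leq_eqVlt => /orP [/eqP ->|Hi].
  exists w; do 2!split => //; move=> t /Hs' Ht; apply: List.in_or_app; by right.
have [w' [? [? Hw']]] := Hs i Hi; exists w'; do 2!split => //.
move=> t /Hw' Ht; apply: List.in_or_app; by left.
Qed.

Lemma extv_in (A : Type) (B : set A) (F : fieldType) d v (t : 'I_d -> A)
  (H : forall i, B (t i)) :
  @extv A B F d v t = v (fun i => exist _ (t i) (H i)).
Proof.
rewrite /extv; case: pselect => [H'|//]; congr v; apply: funext => i.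
congr exist; exact: Prop_irrelevance.
Qed.
Lemma chain_restrict (L : signature) (A : Type) (IA : interp L A)
  (F : fieldType) (d : nat) (Bs : set (set A)) n :
  homogeneous IA ->
  (forall B, Bs B -> finite_subset B) ->
  (forall S : set A, finite_subset S ->
     exists2 B, Bs B & forall x, S x -> B x) ->
  has_chain IA F d n -> exists2 B, Bs B & has_chain (induced IA B) F d n.
Proof.
move=> Hhom HBf Hcov [V [HV Hp]].
have [s Hs] := chain_fin (fun i Hi => (HV i Hi).1) Hp (leqnn n).
pose S : set A := fun x => exists t, List.In t s /\ exists j, x = t j.
have HSf : finite_subset S.
  exists (List.flat_map (fun t => map t (enum 'I_d)) s).
  move=> x [t [Ht [j ->]]]; apply/List.in_flat_map; exists t; split => //.
  exact/List.in_map/In_enum.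
have [B HB HSB] := Hcov S HSf.
exists B => //.
exists (fun i v => V i (@extv A B F d v)); split.
  move=> i Hi; have [[Hfs H0 HD] Hinv] := HV i Hi; split; first split.
  - move=> v Vv; have [s' Hs'] := Hfs _ Vv.
    pose g (t : 'I_d -> A) : seq ('I_d -> {x | B x}) :=
      match pselect (forall i, B (t i)) with
      | left H => [:: fun i => exist _ (t i) (H i)] | right _ => [::] end.
    exists (List.flat_map g s') => t Ht.
    apply/List.in_flat_map; exists (fun i => proj1_sig (t i)); split.
      by apply: Hs'; rewrite extv_emb.
    rewrite /g; case: pselect => [H|H]; last first.
      by exfalso; apply: H => j; exact: proj2_sig (t j).
    left; apply: funext => j; exact: exist_proj.
  - by rewrite /= extv0.
  - by move=> a u v Hu Hv /=; rewrite extvD; exact: HD.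
  move=> g h Hgh v Vv /=.
  have HBfin := HBf B HB.
  have [a [b [Haut Hext]]] := Hhom B B HBfin HBfin g h Hgh.
  have [hg [gh _]] := Hgh. have [ab [ba _]] := Haut.
  suff -> : @extv A B F d (fun t => v (fun i => h (t i))) =
            (fun t => extv v (fun i => b (t i))) by have := Hinv a b Haut _ Vv.
  apply: funext => t; case: (pselect (forall i, B (t i))) => [H|H].
    rewrite (extv_in _ H).
    have E : (fun j => b (t j)) = (fun j => proj1_sig (h (exist _ (t j) (H j)))).
      apply: funext => j.
      transitivity (b (proj1_sig (g (h (exist _ (t j) (H j)))))); first by rewrite gh.
      by rewrite -Hext ab.
    by rewrite E extv_emb.
  rewrite extv_out // extv_out // => Hb; apply: H => j.
  rewrite -(ba (t j)).
  have -> : a (b (t j)) = proj1_sig (g (exist _ (b (t j)) (Hb j))) by rewrite -Hext.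
  exact: proj2_sig.
move=> i Hi; have [Hsub _] := Hp i Hi; split.
  by move=> v /Hsub.
have [w [Vw [nVw Hw]]] := Hs i Hi.
have Ew : @extv A B F d (fun t => w (fun i => proj1_sig (t i))) = w.
  apply: funext => t; case: (pselect (forall i, B (t i))) => [H|H].
    by rewrite /extv; case: pselect.
  rewrite extv_out //; case: (eqVneq (w t) 0) => [->//|/Hw Ht]; exfalso; apply: H => j.
  apply: HSB; exists t; split => //; by exists j.
exists (fun t => w (fun i => proj1_sig (t i))); by rewrite /= Ew.
Qed.

Theorem mainTheorem5 (L : signature) (A : Type) (IA : interp L A)
  (F : fieldType) (d : nat) (Bs : set (set A)) :
  countable_type A ->
  homogeneous IA ->
  (0 < d)%N ->
  (forall B, Bs B -> finite_subset B) ->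
  (forall S : set A, finite_subset S ->
     exists2 B, Bs B & forall x, S x -> B x) ->
  enat_le (lin_pow_length IA F d)
    (esup (fun e => exists2 B, Bs B & e = lin_pow_length (induced IA B) F d)).
Proof.
move=> _ Hhom _ HBf Hcov.
have [_ Hleast] := esupP (fun e => exists n, has_chain IA F d n /\ e = Some n).
apply: Hleast => x [n [Hch ->]].
have [B HB HchB] := chain_restrict Hhom HBf Hcov Hch.
have [HupB _] := esupP (fun e => exists n, has_chain (induced IA B) F d n /\ e = Some n).
have [HupT _] := esupP (fun e => exists2 B, Bs B & e = lin_pow_length (induced IA B) F d).
apply: enat_le_trans (HupT (lin_pow_length (induced IA B) F d) _); last by exists B.
apply: HupB; by exists n.
Qed.
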